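(* Fix $a\in\mathbb R$, $b>0$, $c>0$ and a mean $M_1$. Consider the two-player Bayesian contest with efforts restricted to $[0,\infty)$ in which cost types are i.i.d. draws from a distribution $F$ with support $[\alpha,\beta]\subset(0,c)$, mean $M_1$ and variance $\sigma_\theta^2>0$, and a type-$\theta$ player choosing $\tilde x$ against opponent strategy $x(\cdot)$ receives $\int[P(\tilde x,x(\theta'))-\theta\tilde x]\,dF(\theta')$ with $P(x,y)=\tfrac12+(x-y)\bigl(c-b(x+y)+axy\bigr)$. Restrict attention to priors $F$ for which the contest is fully active, meaning that the unique symmetric Bayesian Nash equilibrium $x_F$ of the affine relaxation (actions in $\mathbb R$; for $a=0$ it is $x_F(\theta)=\frac{c-\theta}{2b}$) is nonnegative on $[\alpha,\beta]$, so that it is an equilibrium with nonnegative efforts. Then, among such fully active priors with mean $M_1$, expected equilibrium effort $E_F[x_F(\theta)]$ is decreasing in the type variance $\sigma_\theta^2$ if $a>0$ (suppression), increasing in $\sigma_\theta^2$ if $a<0$ (empowerment), and independent of $\sigma_\theta^2$ if $a=0$.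
   Context: The affine relaxation is the same Bayesian contest with actions allowed in all of $\mathbb R$ and the raw (untruncated) $P$. For $a\neq0$ its unique symmetric equilibrium is affine in type and its expected effort depends on $F$ only through its mean and variance. *)

(* Defs.v *)
From HB Require Import structures.
From mathcomp Require Import all_boot all_order all_algebra.
From mathcomp Require Import all_classical all_reals all_analysis.
Set Implicit Arguments. Unset Strict Implicit. Unset Printing Implicit Defensive.
Import Order.TTheory GRing.Theory Num.Theory.
Local Open Scope classical_set_scope.
Local Open Scope ring_scope.

Section Contest.
Context {R : realType}.

Definition winP (a b c : R) (x y : R) : R :=
  2^-1 + (x - y) * (c - b * (x + y) + a * x * y).

Definition prior_ok (c M1 : R) (F : probability R R) (alpha beta : R) : Prop :=
  [/\ 0 < alpha /\ alpha < beta /\ beta < c,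
      F [set` `[alpha, beta]] = 1%E,
      (forall t, alpha <= t <= beta -> forall e : R, 0 < e ->
          (0 < F [set` `](t - e)%R, (t + e)%R[])%E),
      (\int[F]_t (t%:E) = M1%:E)%E
    & (0 < \int[F]_t (((t - M1) ^+ 2)%:E))%E ].

Definition type_var (M1 : R) (F : probability R R) : \bar R :=
  (\int[F]_t (((t - M1) ^+ 2)%:E))%E.

(** Expected payoff of a type-theta player choosing xt against the
    opponent strategy x, in the affine relaxation (raw P, actions in R). *)
Definition payoff (a b c : R) (F : probability R R) (x : R -> R)
    (theta xt : R) : \bar R :=
  (\int[F]_t ((winP a b c xt (x t) - theta * xt)%:E))%E.

(** x is a symmetric Bayesian Nash equilibrium of the affine relaxation:
    for every type theta in the support [alpha,beta], x theta is a best
    response among all real actions, given that the opponent plays x.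
    (Measurability/integrability of x and x^2 ensure expected payoffs are
    well defined and finite.) *)
Definition affine_sym_BNE (a b c : R) (F : probability R R) (alpha beta : R)
    (x : R -> R) : Prop :=
  [/\ measurable_fun setT x,
      F.-integrable setT (fun t => (x t)%:E),
      F.-integrable setT (fun t => ((x t) ^+ 2)%:E)
    & forall theta, alpha <= theta <= beta -> forall xt : R,
        (payoff a b c F x theta xt <= payoff a b c F x theta (x theta))%E ].

Definition fully_active (alpha beta : R) (x : R -> R) : Prop :=
  forall theta, alpha <= theta <= beta -> 0 <= x theta.

Definition exp_effort (F : probability R R) (x : R -> R) : \bar R :=
  (\int[F]_t ((x t)%:E))%E.

End Contest.

(* Main.v *)
Require Import Defs.
From HB Require Import structures.
From mathcomp Require Import all_boot all_order all_algebra.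
From mathcomp Require Import all_classical all_reals all_analysis.
From mathcomp Require Import measurable_realfun.
From mathcomp Require Import ring lra.
Import Order.TTheory GRing.Theory Num.Theory.
Local Open Scope classical_set_scope.
Local Open Scope ring_scope.

Section H.
Context {R : realType} (F : probability R R).


Lemma ae_on (alpha beta : R) (f g : R -> \bar R) :
  F [set` `[alpha, beta]] = 1%E ->
  (forall t, alpha <= t <= beta -> f t = g t) ->
  ae_eq F setT f g.
Proof.
move=> F1 H.
exists (~` [set` `[alpha, beta]]); split.
- by apply: measurableC; exact: measurable_itv.
- have := @probability_setC _ _ _ F _ (measurable_itv `[alpha, beta]). rewrite F1 subee //. 
- move=> t /= Ht Hin; apply: Ht => _.
  by apply: H; move: Hin; rewrite /= in_itv.
Qed.

Lemma poly_int (x : R -> R) (A B C : R) :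
  F.-integrable setT (fun t => (x t)%:E) ->
  F.-integrable setT (fun t => ((x t) ^+ 2)%:E) ->
  (\int[F]_t ((A + B * x t + C * x t ^+ 2)%:E) =
   (A + B * fine (\int[F]_t ((x t)%:E)) + C * fine (\int[F]_t (((x t) ^+ 2)%:E)))%:E)%E.
Proof.
move=> i1 i2.
have f1 : (\int[F]_t ((x t)%:E))%E \is a fin_num by exact: integrable_fin_num.
have f2 : (\int[F]_t (((x t)^+2)%:E))%E \is a fin_num by exact: integrable_fin_num.
rewrite (eq_integral (fun t => A%:E + (B%:E * (x t)%:E + C%:E * ((x t)^+2)%:E)))%E; last first.
  by move=> t _; rewrite -!EFinM -!EFinD addrA.
have iA : F.-integrable setT (fun t : R => A%:E).
  exact: (finite_measure_integrable_cst F A measurableT).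
rewrite integralD //; last by apply: integrableD => //; apply: integrableZl.
rewrite integralD //; try by apply: integrableZl.
rewrite integralZl // integralZl // integral_cst //.
rewrite [X in (A%:E * X)%E](_ : _ = 1%E); last exact: probability_setT.
rewrite mule1.
by rewrite -(fineK f1) -(fineK f2) /= -!EFinM -!EFinD addrA.
Qed.


Lemma mpoly (x : R -> R) (A B C : R) : measurable_fun setT x ->
  measurable_fun setT (EFin \o (fun t => A + B * x t + C * x t ^+ 2)).
Proof.
move=> mx; apply/measurable_EFinP.
apply: measurable_funD; first apply: measurable_funD.
- exact: measurable_cst.
- by apply: measurable_funM => //; exact: measurable_cst.
- apply: measurable_funM; first exact: measurable_cst.
  exact: measurable_funX.
Qed.
End H.

Lemma quad_max {R : realType} (A B y : R) :
  (forall z, A * z ^+ 2 + B * z <= A * y ^+ 2 + B * y) ->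
  [/\ A <= 0, (A = 0 -> B = 0) & (A < 0 -> y = B / (-2 * A))].
Proof.
move=> H; split.
- rewrite leNgt; apply/negP => A0.
  set t := (`|2 * A * y + B| + 1) / A.
  have t0 : 0 < t by apply: divr_gt0 => //; apply: ltr_pwDr => //.
  have At : A * t = `|2 * A * y + B| + 1 by rewrite /t mulrC divfK // gt_eqF.
  have := H (y + t).
  have hb : - (2 * A * y + B) <= `|2 * A * y + B| by rewrite -normrN ler_norm.
  have : 0 < t * (A * t + 2 * A * y + B) by apply: mulr_gt0 => //; rewrite At; lra.
  move=> h1 h2.
  have : A * (y + t) ^+ 2 + B * (y + t) - (A * y ^+ 2 + B * y) = t * (A * t + 2 * A * y + B) by ring.
  lra.
- move=> A0; have := H (y + B); rewrite A0 !mul0r !add0r => h.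
  have : B * B <= 0 by nra.
  by move=> hb; apply/eqP; rewrite -sqrf_eq0; apply/eqP; apply: le_anti; rewrite hb sqr_ge0.
- move=> A0; set z := B / (-2 * A).
  have Az : A * z = - B / 2.
    have An : A != 0 by rewrite lt_eqF.
    by rewrite /z; field.
  have := H z.
  have : A * y ^+ 2 + B * y - (A * z ^+ 2 + B * z) = A * (y - z) ^+ 2.
    have -> : A * z ^+ 2 = (A * z) * z by ring.
    have -> : B = - 2 * (A * z) by rewrite Az; field.
    ring.
  move=> e h.
  have : A * (y - z) ^+ 2 >= 0 by lra.
  have : (y - z) ^+ 2 >= 0 by apply: sqr_ge0.
  move=> s0 s1.
  have : (y - z) ^+ 2 = 0 by nra.
  by move/eqP; rewrite sqrf_eq0 subr_eq0 => /eqP.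
Qed.

Lemma keyG {R : realType} (a b c M1 m q s : R) :
  2 * (b - a * m) * m = c - a * q - M1 ->
  s = 4 * (b - a * m) ^+ 2 * (q - m ^+ 2) ->
  a * s = - 4 * (b - a * m) ^+ 2 * (2 * b * m - a * m ^+ 2 - (c - M1)).
Proof.
move=> h1 ->.
have -> : c - M1 = 2 * (b - a * m) * m + a * q by rewrite h1; ring.
ring.
Qed.

Lemma final_alg {R : realType} (a b c M1 m1 q1 s1 m2 q2 s2 : R) :
  0 < b -> 0 < s1 -> 0 < s2 ->
  0 < b - a * m1 -> 0 < b - a * m2 ->
  2 * (b - a * m1) * m1 = c - a * q1 - M1 ->
  s1 = 4 * (b - a * m1) ^+ 2 * (q1 - m1 ^+ 2) ->
  2 * (b - a * m2) * m2 = c - a * q2 - M1 ->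
  s2 = 4 * (b - a * m2) ^+ 2 * (q2 - m2 ^+ 2) ->
  [/\ 0 < a -> s1 < s2 -> m2 < m1, a < 0 -> s1 < s2 -> m1 < m2
    & a = 0 -> m1 = m2].
Proof.
move=> b0 s10 s20 D1 D2 e1 f1 e2 f2.
have k1 := @keyG _ a b c M1 m1 q1 s1 e1 f1; have k2 := @keyG _ a b c M1 m2 q2 s2 e2 f2.
set D1' := b - a * m1 in D1 k1; set D2' := b - a * m2 in D2 k2.
set G1 := 2 * b * m1 - a * m1 ^+ 2 - (c - M1) in k1.
set G2 := 2 * b * m2 - a * m2 ^+ 2 - (c - M1) in k2.
have dG : G2 - G1 = (m2 - m1) * (D1' + D2') by rewrite /G1 /G2 /D1' /D2'; ring.
split.
- move=> a0 s12; rewrite ltNge; apply/negP => m12.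
  have hD : D2' <= D1' by rewrite /D1' /D2'; nra.
  have hD2 : D2' ^+ 2 <= D1' ^+ 2 by nra.
  have hG : G1 <= G2 by nra.
  have g2 : G2 < 0 by nra.
  have : a * s2 <= a * s1.
    rewrite k1 k2.
    have : D2' ^+ 2 * (- G2) <= D1' ^+ 2 * (- G1) by nra.
    nra.
  nra.
- move=> a0 s12; rewrite ltNge; apply/negP => m12.
  have hD : D2' <= D1' by rewrite /D1' /D2'; nra.
  have hD2 : D2' ^+ 2 <= D1' ^+ 2 by nra.
  have hG : G2 <= G1 by nra.
  have g2 : 0 < G2 by nra.
  have : - a * s2 <= - a * s1.
    have -> : - a * s1 = 4 * D1' ^+ 2 * G1 by rewrite mulNr k1; ring.
    have -> : - a * s2 = 4 * D2' ^+ 2 * G2 by rewrite mulNr k2; ring.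
    have : D2' ^+ 2 * G2 <= D1' ^+ 2 * G1 by nra.
    nra.
  nra.
- move=> a0; rewrite a0 in e1 e2.
  have : 2 * b * m1 = 2 * b * m2 by move: e1 e2; rewrite !mul0r !subr0 => e1 e2; lra.
  move=> h; apply: (mulfI (x := 2 * b)); first by rewrite gt_eqF //; lra.
  by [].
Qed.

Lemma bne_char {R : realType} (a b c M1 : R) (F : probability R R)
  (alpha beta : R) (x : R -> R) :
  prior_ok c M1 F alpha beta -> affine_sym_BNE a b c F alpha beta x ->
  exists m q s : R, [/\ exp_effort F x = m%:E, type_var M1 F = s%:E, 0 < s,
    0 < b - a * m & 2 * (b - a * m) * m = c - a * q - M1 /\
    s = 4 * (b - a * m) ^+ 2 * (q - m ^+ 2)].
Proof.
move=> [[a0 [ab bc]] F1 _ EM Var] [mx ix ix2 BR].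
set m := fine (\int[F]_t ((x t)%:E))%E.
set q := fine (\int[F]_t (((x t) ^+ 2)%:E))%E.
have pay : forall th xt, payoff a b c F x th xt =
  ((2^-1 + c * xt - b * xt ^+ 2 - th * xt) + (a * xt ^+ 2 - c) * m
    + (b - a * xt) * q)%:E.
  move=> th xt; rewrite /payoff.
  rewrite (eq_integral (fun t => ((2^-1 + c * xt - b * xt ^+ 2 - th * xt)
     + (a * xt ^+ 2 - c) * x t + (b - a * xt) * x t ^+ 2)%:E)); last first.
    by move=> t _; congr EFin; rewrite /winP; ring.
  by rewrite poly_int.
have ineq : forall th, alpha <= th <= beta -> forall z,
  (a * m - b) * z ^+ 2 + (c - a * q - th) * z <=
  (a * m - b) * (x th) ^+ 2 + (c - a * q - th) * (x th).
  move=> th hth z; have := BR th hth z; rewrite !pay lee_fin => h; lra.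
have hal : alpha <= alpha <= beta by apply/andP; split; lra.
have hbe : alpha <= beta <= beta by apply/andP; split; lra.
have [A0 Aza _] := @quad_max _ _ _ _ (ineq _ hal).
have [_ Azb _] := @quad_max _ _ _ _ (ineq _ hbe).
have Alt : a * m - b < 0.
  rewrite lt_neqAle A0 andbT; apply/eqP => h.
  have := Aza h; have := Azb h; lra.
have Dn : b - a * m != 0 by rewrite gt_eqF //; lra.
have xform : forall th, alpha <= th <= beta ->
    th = (c - a * q) - 2 * (b - a * m) * x th.
  move=> th hth; have [_ _ /(_ Alt) ->] := @quad_max _ _ _ _ (ineq _ hth).
  by field; rewrite -opprB oppr_eq0.
have aeq : forall (g : R -> R) A B C, measurable_fun setT g ->
  (forall th, alpha <= th <= beta -> g th = A + B * x th + C * x th ^+ 2) ->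
  (\int[F]_t ((g t)%:E) = (A + B * m + C * q)%:E)%E.
  move=> g A B C mg hg.
  rewrite (ae_eq_integral (fun t => (A + B * x t + C * x t ^+ 2)%:E)) //.
  - by rewrite poly_int.
  - exact/measurable_EFinP.
  - exact: mpoly.
  - by apply: (ae_on F _ _ _ _ F1) => th hth; rewrite hg.
have EM' := aeq id (c - a * q) (- 2 * (b - a * m)) 0 (@measurable_id _ _ setT).
rewrite EM' in EM; last by move=> th hth; rewrite {1}(xform th hth); ring.
have {}EM : c - a * q + -2 * (b - a * m) * m + 0 * q = M1 by case: EM.
set K := c - a * q in EM xform.
set D := b - a * m in EM xform Dn.
have TV := aeq (fun t => (t - M1) ^+ 2) ((K - M1) ^+ 2) (- 4 * D * (K - M1))
   (4 * D ^+ 2).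
rewrite -/(type_var M1 F) in Var.
rewrite /type_var TV in Var *; last first.
  by move=> th hth; rewrite {1}(xform th hth); ring.
  apply: measurable_funX; apply: measurable_funB => //; exact: measurable_cst.
rewrite lte_fin in Var.
exists m, q, ((K - M1) ^+ 2 + - 4 * D * (K - M1) * m + 4 * D ^+ 2 * q); split => //; last split.
- by rewrite /exp_effort /m fineK //; exact: integrable_fin_num.
- rewrite /D; lra.
- rewrite -EM /K /D; ring.
- have hK : K - M1 = 2 * D * m.
    by rewrite -EM /K /D; ring.
  rewrite hK /D; ring.
Qed.

Theorem theorem4 (R : realType) (a b c M1 : R) (hb : 0 < b) (hc : 0 < c)
    (F1 F2 : probability R R) (alpha1 beta1 alpha2 beta2 : R)
    (x1 x2 : R -> R) :
  prior_ok c M1 F1 alpha1 beta1 ->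
  prior_ok c M1 F2 alpha2 beta2 ->
  affine_sym_BNE a b c F1 alpha1 beta1 x1 ->
  affine_sym_BNE a b c F2 alpha2 beta2 x2 ->
  fully_active alpha1 beta1 x1 ->
  fully_active alpha2 beta2 x2 ->
  [/\ (0 < a -> (type_var M1 F1 < type_var M1 F2)%E ->
         (exp_effort F2 x2 < exp_effort F1 x1)%E),
      (a < 0 -> (type_var M1 F1 < type_var M1 F2)%E ->
         (exp_effort F1 x1 < exp_effort F2 x2)%E)
    & (a = 0 -> exp_effort F1 x1 = exp_effort F2 x2)].
Proof.
move=> p1 p2 b1 b2 _ _.
have [m1 [q1 [s1 [E1 V1 s10 D1 [e1 f1]]]]] := @bne_char _ _ _ _ _ _ _ _ _ p1 b1.
have [m2 [q2 [s2 [E2 V2 s20 D2 [e2 f2]]]]] := @bne_char _ _ _ _ _ _ _ _ _ p2 b2.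
have [h1 h2 h3] := @final_alg _ _ _ _ _ _ _ _ _ _ _ hb s10 s20 D1 D2 e1 f1 e2 f2.
rewrite E1 E2 V1 V2 !lte_fin; split.
- by move=> a0 s12; apply: h1.
- by move=> a0 s12; apply: h2.
- by move=> a0; rewrite h3.
Qed.
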